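(* Let $G=(V,E)$ be a finite simple graph which is $S_{1,1,5}$-free, $K_4$-free, diamond-free and butterfly-free. Let $xy\in E$ and let $r$ be a vertex with $rx\in E$ and $ry\notin E$. For $i\ge 1$ let $N_i=\{z\in V:\operatorname{dist}_G(z,\{x,y\})=i\}$. Assume $N_2$ is an independent set and every vertex of $N_3$ has exactly one neighbor in $N_2$. If $|N_2|\ge 5$, then $N_6=\emptyset$.
   Context: $S_{1,1,5}$ is the tree with a center $u$ adjacent to $a$, $b$ and $z_1$, where $u,z_1,\dots,z_5$ is an induced path, and no other edges. A diamond is $K_4$ minus one edge; a butterfly consists of two disjoint edges (inducing $2K_2$) together with a vertex adjacent to all four of their endpoints. $\operatorname{dist}_G(z,\{x,y\})$ is the minimum of the distances from $z$ to $x$ and to $y$. *)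

(* Defs.v *)
From mathcomp Require Import all_boot.
Set Implicit Arguments. Unset Strict Implicit. Unset Printing Implicit Defensive.

Section Graphs.
Variable T : finType.

Definition simple_graph (e : rel T) := symmetric e /\ irreflexive e.

Definition induced_sub (e : rel T) (n : nat) (h : rel 'I_n) : Prop :=
  exists f : 'I_n -> T, injective f /\ forall i j, e (f i) (f j) = h i j.

Definition H_free (e : rel T) (n : nat) (h : rel 'I_n) : Prop :=
  ~ induced_sub e h.

Fixpoint walkb (e : rel T) (k : nat) (s z : T) : bool :=
  match k with
  | 0 => s == z
  | k'.+1 => [exists w, e s w && walkb e k' w z]
  end.

Definition dist_set_eq (e : rel T) (S : {set T}) (z : T) (i : nat) : bool :=
  [exists s in S, walkb e i s z] &&
  [forall j : 'I_i, forall s in S, ~~ walkb e j s z].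

Definition Nlayer (e : rel T) (x y : T) (i : nat) : {set T} :=
  [set z | dist_set_eq e [set x; y] z i].

End Graphs.

Definition pat {n : nat} (l : seq (nat * nat)) : rel 'I_n :=
  fun i j => ((val i, val j) \in l) || ((val j, val i) \in l).

(* S_{1,1,5}: 0 = u, 1 = a, 2 = b, 3..7 = z1..z5 *)
Definition S115 : rel 'I_8 :=
  @pat 8 [:: (0,1); (0,2); (0,3); (3,4); (4,5); (5,6); (6,7)].
Definition K4 : rel 'I_4 :=
  @pat 4 [:: (0,1); (0,2); (0,3); (1,2); (1,3); (2,3)].
Definition diamond : rel 'I_4 :=
  @pat 4 [:: (0,1); (0,2); (0,3); (1,2); (1,3)].
Definition butterfly : rel 'I_5 :=
  @pat 5 [:: (0,1); (0,2); (0,3); (0,4); (1,2); (3,4)].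

(* Main.v *)
Require Import Defs.
From mathcomp Require Import all_boot.
Set Implicit Arguments. Unset Strict Implicit. Unset Printing Implicit Defensive.

Section Gen.
Variables (T : finType) (e : rel T).
Hypothesis esym : symmetric e.
Hypothesis eirr : irreflexive e.

Lemma adj_neq a b : e a b -> a != b.
Proof. by apply: contraTneq => ->; rewrite eirr. Qed.

Lemma neq3 a b c : e a c -> ~~ e b c -> a != b.
Proof. by move=> H1; apply: contraNneq => <-. Qed.

Lemma ind_list n (h : rel 'I_n) (d : T) (l : seq T) :
  size l = n -> uniq l ->
  (forall i j : 'I_n, e (nth d l i) (nth d l j) = h i j) -> induced_sub e h.
Proof.
move=> Hs Hu Hh; exists (fun i => nth d l i); split=> // i j /eqP.
by rewrite nth_uniq ?Hs // => /eqP/val_inj.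
Qed.

Ltac symsat :=
  repeat match goal with
  | H : is_true (e ?a ?b) |- _ =>
      lazymatch goal with
      | _ : is_true (e b a) |- _ => fail
      | _ => have := H; rewrite esym => ?
      end
  | H : is_true (~~ e ?a ?b) |- _ =>
      lazymatch goal with
      | _ : is_true (~~ e b a) |- _ => fail
      | _ => have := H; rewrite esym => ?
      end
  end.

Ltac dst :=
  match goal with
  | |- is_true (?a != ?b) =>
    first [ assumption | by rewrite eq_sym
          | by apply: adj_neq
          | match goal with H : is_true (e a ?c) |- _ => apply: (neq3 H); assumption end
          | match goal with H : is_true (e b ?c) |- _ => rewrite eq_sym; apply: (neq3 H); assumption end ]
  end.

Ltac adjc :=
  first [ by rewrite eirr | by apply/idP | by apply/negbTE ].

Lemma noS115 (a0 a1 a2 a3 a4 a5 a6 a7 : T) : H_free e S115 ->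
  e a0 a1 -> e a0 a2 -> e a0 a3 -> e a3 a4 -> e a4 a5 -> e a5 a6 -> e a6 a7 ->
  ~~ e a0 a4 -> ~~ e a0 a5 -> ~~ e a0 a6 -> ~~ e a0 a7 ->
  ~~ e a1 a2 -> ~~ e a1 a3 -> ~~ e a1 a4 -> ~~ e a1 a5 -> ~~ e a1 a6 -> ~~ e a1 a7 ->
  ~~ e a2 a3 -> ~~ e a2 a4 -> ~~ e a2 a5 -> ~~ e a2 a6 -> ~~ e a2 a7 ->
  ~~ e a3 a5 -> ~~ e a3 a6 -> ~~ e a3 a7 ->
  ~~ e a4 a6 -> ~~ e a4 a7 -> ~~ e a5 a7 -> a1 != a2 -> False.
Proof.
move=> Hf; intros; apply: Hf; symsat.
apply: (@ind_list 8 _ a0 [:: a0; a1; a2; a3; a4; a5; a6; a7]) => //.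
  rewrite /= !inE !negb_or; repeat (apply/andP; split); (done || dst).
move=> [[|[|[|[|[|[|[|[|//]]]]]]]] Hi] [[|[|[|[|[|[|[|[|//]]]]]]]] Hj];
  rewrite /S115 /pat /=; adjc.
Qed.

Lemma noK4 (a0 a1 a2 a3 : T) : H_free e K4 ->
  e a0 a1 -> e a0 a2 -> e a0 a3 -> e a1 a2 -> e a1 a3 -> e a2 a3 -> False.
Proof.
move=> Hf; intros; apply: Hf; symsat.
apply: (@ind_list 4 _ a0 [:: a0; a1; a2; a3]) => //.
  rewrite /= !inE !negb_or; repeat (apply/andP; split); (done || dst).
move=> [[|[|[|[|//]]]] Hi] [[|[|[|[|//]]]] Hj]; rewrite /K4 /pat /=; adjc.
Qed.

Lemma nodiamond (a0 a1 a2 a3 : T) : H_free e diamond ->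
  e a0 a1 -> e a0 a2 -> e a0 a3 -> e a1 a2 -> e a1 a3 -> ~~ e a2 a3 -> a2 != a3 -> False.
Proof.
move=> Hf; intros; apply: Hf; symsat.
apply: (@ind_list 4 _ a0 [:: a0; a1; a2; a3]) => //.
  rewrite /= !inE !negb_or; repeat (apply/andP; split); (done || dst).
move=> [[|[|[|[|//]]]] Hi] [[|[|[|[|//]]]] Hj]; rewrite /diamond /pat /=; adjc.
Qed.

Lemma nobutterfly (a0 a1 a2 a3 a4 : T) : H_free e butterfly ->
  e a0 a1 -> e a0 a2 -> e a0 a3 -> e a0 a4 -> e a1 a2 -> e a3 a4 ->
  ~~ e a1 a3 -> ~~ e a1 a4 -> ~~ e a2 a3 -> ~~ e a2 a4 -> False.
Proof.
move=> Hf; intros; apply: Hf; symsat.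
apply: (@ind_list 5 _ a0 [:: a0; a1; a2; a3; a4]) => //.
  rewrite /= !inE !negb_or; repeat (apply/andP; split); (done || dst).
move=> [[|[|[|[|[|//]]]]] Hi] [[|[|[|[|[|//]]]]] Hj]; rewrite /butterfly /pat /=; adjc.
Qed.
End Gen.

Section Lay.
Variables (T : finType) (e : rel T).
Hypothesis esym : symmetric e.

Lemma walk_snoc k s w z : walkb e k s w -> e w z -> walkb e k.+1 s z.
Proof.
elim: k s => [|k IH] s /=.
  by move=> /eqP -> Hwz; apply/existsP; exists z; rewrite Hwz eqxx.
move=> /existsP [w' /andP [H1 H2]] Hwz; apply/existsP; exists w'.
by apply/andP; split => //; exact: IH H2 Hwz.
Qed.

Lemma walk_unsnoc k s z : walkb e k.+1 s z -> exists2 w, walkb e k s w & e w z.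
Proof.
elim: k s => [|k IH] s /=.
  by move=> /existsP [w /andP [H1 /eqP <-]]; exists s.
move=> /existsP [w /andP [H1 H2]]; have [w' H3 H4] := IH _ H2.
by exists w' => //; apply/existsP; exists w; apply/andP; split.
Qed.

Variables x y : T.
Notation N i := (Nlayer e x y i).

Lemma inN i z : (z \in N i) = [exists s in [set x; y], walkb e i s z] &&
  [forall j : 'I_i, forall s in [set x; y], ~~ walkb e j s z].
Proof. by rewrite inE. Qed.

Lemma N_uniq i j z : z \in N i -> z \in N j -> i = j.
Proof.
wlog lt : i j / i < j.
  move=> W Hi Hj; case: (ltngtP i j) => // h.
    exact: W Hi Hj.
  by symmetry; apply: W Hj Hi.
rewrite !inN => /andP [/existsP [s /andP [Hs Hw]] _] /andP [_ /forallP /(_ (Ordinal lt))].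
by move=> /forallP /(_ s); rewrite Hs Hw.
Qed.

Lemma N_adj i j a b : a \in N i -> b \in N j -> e a b -> j <= i.+1.
Proof.
move=> Ha Hb Hab; rewrite leqNgt; apply/negP => lt.
move: Ha Hb; rewrite !inN => /andP [/existsP [s /andP [Hs Hw]] _].
move=> /andP [_ /forallP /(_ (Ordinal lt))] /forallP /(_ s).
by rewrite Hs (walk_snoc Hw Hab).
Qed.

Lemma nlay i j a b : a \in N i -> b \in N j -> (i.+1 < j) || (j.+1 < i) -> ~~ e a b.
Proof.
move=> Ha Hb /orP [] lt; apply/negP => Hab.
  by have := N_adj Ha Hb Hab; rewrite leqNgt lt.
by rewrite esym in Hab; have := N_adj Hb Ha Hab; rewrite leqNgt lt.
Qed.

Lemma ndist i j a b : a \in N i -> b \in N j -> i != j -> a != b.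
Proof. by move=> Ha Hb; apply: contraNneq => E; rewrite E in Ha; rewrite (N_uniq Ha Hb). Qed.

Lemma N_down i z : z \in N i.+1 -> exists2 w, w \in N i & e w z.
Proof.
rewrite inN => /andP [/existsP [s /andP [Hs Hw]] Hall].
have [w Hw1 Hw2] := walk_unsnoc Hw; exists w => //.
rewrite inN; apply/andP; split; first by apply/existsP; exists s; rewrite Hs.
apply/forallP => j; apply/forallP => s'; apply/implyP => Hs'; apply/negP => Hj.
have lt : j.+1 < i.+1 by rewrite ltnS.
move/forallP: Hall => /(_ (Ordinal lt)) /forallP /(_ s').
by rewrite Hs' (walk_snoc Hj Hw2).
Qed.

Lemma N0x : x \in N 0.
Proof. rewrite inN; apply/andP; split; last by apply/forallP => -[m Hm]; exfalso; rewrite ltn0 in Hm.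
by apply/existsP; exists x; rewrite /= !inE eqxx. Qed.
Lemma N0y : y \in N 0.
Proof. rewrite inN; apply/andP; split; last by apply/forallP => -[m Hm]; exfalso; rewrite ltn0 in Hm.
by apply/existsP; exists y; rewrite /= !inE eqxx orbT. Qed.

Lemma N0P z : z \in N 0 -> z = x \/ z = y.
Proof.
rewrite inN => /andP [/existsP [s /andP [Hs /= /eqP <-]] _].
by move: Hs; rewrite !inE => /orP [] /eqP ->; [left|right].
Qed.

End Lay.

Lemma Nswap (T : finType) (e : rel T) x y i : Nlayer e y x i = Nlayer e x y i.
Proof. by apply/setP => z; rewrite !inE /dist_set_eq setUC. Qed.

Section Core.
Variables (T : finType) (e : rel T).
Hypotheses (esym : symmetric e) (eirr : irreflexive e).
Hypotheses (hS : H_free e S115) (hK : H_free e K4) (hD : H_free e diamond)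
  (hB : H_free e butterfly).
Variables x y z2 z3 z4 z5 z6 u : T.
Local Notation N i := (Nlayer e x y i).
Hypotheses (exy : e x y)
  (hind : forall a b, a \in N 2 -> b \in N 2 -> ~~ e a b)
  (huq : forall a, a \in N 2 -> a != z2 -> ~~ e z3 a)
  (H2 : z2 \in N 2) (H3 : z3 \in N 3) (H4 : z4 \in N 4) (H5 : z5 \in N 5)
  (H6 : z6 \in N 6)
  (e23 : e z2 z3) (e34 : e z3 z4) (e45 : e z4 z5) (e56 : e z5 z6)
  (Hu : u \in N 1) (eu2 : e u z2) (eux : e u x).

Let Hx : x \in N 0 := N0x e x y.
Let Hy : y \in N 0 := N0y e x y.

Ltac lay := eapply nlay; [exact esym | eassumption | eassumption | reflexivity].

Ltac dst := match goal with
  | |- is_true (?a != ?b) =>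
    first [ assumption | by rewrite eq_sym
          | (eapply ndist; [eassumption | eassumption | reflexivity])
          | by apply: (adj_neq eirr)
          | by rewrite eq_sym; apply: (adj_neq eirr)
          | match goal with H : is_true (e a ?c) |- _ => apply: (neq3 H); first [done | by rewrite esym] end
          | match goal with H : is_true (e ?c a) |- _ => rewrite esym in H; apply: (neq3 H); first [done | by rewrite esym] end
          | match goal with H : is_true (e b ?c) |- _ => rewrite eq_sym; apply: (neq3 H); first [done | by rewrite esym] end
          | match goal with H : is_true (e ?c b) |- _ => rewrite esym in H; rewrite eq_sym; apply: (neq3 H); first [done | by rewrite esym] end ]
  end.

Ltac uqt := first [ by apply: huq; [assumption | dst]
                  | by rewrite esym; apply: huq; [assumption | dst] ].

Ltac ok := first [ assumption | by rewrite esym | by apply/negbT | by rewrite esym; apply/negbT | lay | by apply: hind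
                 | by rewrite esym; apply: hind | uqt | dst ].

Ltac s115 a0 a1 a2 a3 a4 a5 a6 a7 :=
  apply: (@noS115 T e esym eirr a0 a1 a2 a3 a4 a5 a6 a7 hS); ok.
Ltac k4 a0 a1 a2 a3 := apply: (@noK4 T e esym eirr a0 a1 a2 a3 hK); ok.
Ltac dia a0 a1 a2 a3 := apply: (@nodiamond T e esym eirr a0 a1 a2 a3 hD); ok.
Ltac bfly a0 a1 a2 a3 a4 := apply: (@nobutterfly T e esym eirr a0 a1 a2 a3 a4 hB); ok.

Lemma F1 w a v : w \in N 1 -> a \in N 0 -> e w a -> e w z2 ->
  v \in N 2 -> v != z2 -> e w v -> False.
Proof. by move=> *; s115 w a v z2 z3 z4 z5 z6. Qed.

Lemma pv v : v \in N 2 -> v != z2 ->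
  exists p, [/\ p \in N 1, e p v, e p x || e p y & ~~ e p z2].
Proof.
move=> Hv Hvz; have [p Hp epv] := N_down Hv.
have [a Ha eap] := N_down Hp.
have epa : e p a by rewrite esym.
have pxy : e p x || e p y by case: (N0P Ha) => <-; rewrite epa ?orbT.
exists p; split=> //; apply/negP => epz.
exact: (F1 Hp Ha epa epz Hv Hvz epv).
Qed.

Lemma uv v : v \in N 2 -> v != z2 -> ~~ e u v.
Proof. by move=> Hv Hvz; apply/negP => euv; apply: (F1 Hu Hx eux eu2 Hv Hvz euv). Qed.

Section CaseI.
Hypothesis nuy : ~~ e u y.

Lemma Ia p : p \in N 1 -> ~~ e p z2 -> e p x -> ~~ e p y -> ~~ e p u -> False.
Proof. by move=> *; s115 x y p u z2 z3 z4 z5. Qed.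

Lemma Ic_nu p : p \in N 1 -> e p x -> e p y -> ~~ e p u.
Proof. move=> *; apply/negP => ?; by dia x p u y. Qed.

Lemma Id_nu p : p \in N 1 -> ~~ e p x -> ~~ e p z2 -> ~~ e p u.
Proof. move=> *; apply/negP => ?; by s115 u x p z2 z3 z4 z5 z6. Qed.

Lemma hubI p v v' : p \in N 1 -> ~~ e p z2 -> e p x || e p y ->
  v \in N 2 -> v' \in N 2 -> v != z2 -> v' != z2 -> v != v' -> e p v -> e p v' ->
  ~~ e u v -> ~~ e u v' -> False.
Proof.
move=> Hp pz pxy *; case pxE: (e p x).
  case pyE: (e p y).
    have := Ic_nu Hp pxE pyE => ?; by s115 p v v' x u z2 z3 z4.
  case puE: (e p u); last first.
    by apply: (Ia Hp pz pxE); rewrite ?pyE ?puE.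
  by s115 p v v' u z2 z3 z4 z5.
have pyE : e p y by rewrite pxE in pxy.
have := Id_nu Hp (negbT pxE) pz => ?; by s115 p v v' y x u z2 z3.
Qed.

Lemma bc p p' : p \in N 1 -> p' \in N 1 -> ~~ e p z2 -> ~~ e p' z2 ->
  e p x -> e p u -> ~~ e p y -> e p' x -> e p' y -> ~~ e p' u -> False.
Proof.
move=> *; case: (boolP (e p p')) => ?.
  by dia x p' p y.
by bfly x y p' u p.
Qed.

Lemma pairX p v p' v' : p \in N 1 -> ~~ e p z2 -> p' \in N 1 -> ~~ e p' z2 ->
  v \in N 2 -> v' \in N 2 -> v != z2 -> v' != z2 -> v != v' -> e p v -> e p' v' ->
  ~~ e u v -> ~~ e u v' -> e p x -> e p' x -> False.
Proof.
move=> Hp pz Hp' p'z Hv Hv' vz v'z vv' epv ep'v' uv1 uv2 px p'x.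
case: (eqVneq p p') => [E|pp'].
  subst p'; apply: (hubI Hp pz _ Hv Hv' vz v'z vv' epv ep'v' uv1 uv2).
  by rewrite px.
have cls q : q \in N 1 -> ~~ e q z2 -> e q x -> (e q y && ~~ e q u) || (~~ e q y && e q u).
  move=> Hq qz qx; case qy: (e q y).
    by rewrite (Ic_nu Hq qx qy).
  case qu: (e q u) => //; exfalso; apply: (Ia Hq qz qx); by rewrite ?qy ?qu.
move: (cls p Hp pz px) (cls p' Hp' p'z p'x) => /orP [/andP [py pu] | /andP [py pu]]
   /orP [/andP [p'y p'u] | /andP [p'y p'u]].
- by case: (boolP (e p p')) => ?; [k4 x y p p' | dia x y p p'].
- exact: (bc Hp' Hp p'z pz p'x p'u p'y px py pu).
- exact: (bc Hp Hp' pz p'z px pu py p'x p'y p'u).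
- by case: (boolP (e p p')) => ?; [k4 x u p p' | dia x u p p'].
Qed.

Lemma Dpair p p' : p \in N 1 -> p' \in N 1 -> ~~ e p z2 -> ~~ e p' z2 ->
  ~~ e p x -> ~~ e p' x -> e p y -> e p' y -> p != p' -> ~~ e p p' -> False.
Proof.
move=> Hp Hp' pz p'z px p'x *.
have := Id_nu Hp px pz; have := Id_nu Hp' p'x p'z => ??.
by s115 y p p' x u z2 z3 z4.
Qed.

Lemma tripleD p1 v1 p2 v2 p3 v3 :
  p1 \in N 1 -> ~~ e p1 z2 -> p2 \in N 1 -> ~~ e p2 z2 -> p3 \in N 1 -> ~~ e p3 z2 ->
  v1 \in N 2 -> v2 \in N 2 -> v3 \in N 2 -> v1 != z2 -> v2 != z2 -> v3 != z2 ->
  v1 != v2 -> v1 != v3 -> v2 != v3 -> e p1 v1 -> e p2 v2 -> e p3 v3 ->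
  ~~ e u v1 -> ~~ e u v2 -> ~~ e u v3 ->
  e p1 x || e p1 y -> e p2 x || e p2 y -> e p3 x || e p3 y ->
  ~~ e p1 x -> ~~ e p2 x -> ~~ e p3 x -> False.
Proof.
move=> Hp1 p1z Hp2 p2z Hp3 p3z Hv1 Hv2 Hv3 v1z v2z v3z d12 d13 d23 e1 e2 e3 u1 u2 u3
  o1 o2 o3 n1 n2 n3.
have y1 : e p1 y by rewrite (negbTE n1) in o1.
have y2 : e p2 y by rewrite (negbTE n2) in o2.
have y3 : e p3 y by rewrite (negbTE n3) in o3.
case: (eqVneq p1 p2) => [E|q12].
  by subst; apply: (hubI Hp1 p1z o1 Hv1 Hv2 v1z v2z d12 e1 e2 u1 u2).
case: (eqVneq p1 p3) => [E|q13].
  by subst; apply: (hubI Hp1 p1z o1 Hv1 Hv3 v1z v3z d13 e1 e3 u1 u3).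
case: (eqVneq p2 p3) => [E|q23].
  by subst; apply: (hubI Hp2 p2z o2 Hv2 Hv3 v2z v3z d23 e2 e3 u2 u3).
case: (boolP (e p1 p2)) => a12; last exact: (Dpair Hp1 Hp2 p1z p2z n1 n2 y1 y2 q12 a12).
case: (boolP (e p1 p3)) => a13; last exact: (Dpair Hp1 Hp3 p1z p3z n1 n3 y1 y3 q13 a13).
case: (boolP (e p2 p3)) => a23; last exact: (Dpair Hp2 Hp3 p2z p3z n2 n3 y2 y3 q23 a23).
by k4 y p1 p2 p3.
Qed.
End CaseI.

Section CaseIII.
Hypothesis euy : e u y.

Lemma III_nu p : p \in N 1 -> e p x || e p y -> ~~ e p u.
Proof.
move=> Hp pxy; apply/negP => pu.
case px: (e p x).
  case py: (e p y); first by k4 x y u p.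
  by dia x u p y.
have py : e p y by rewrite px in pxy.
by dia y u p x.
Qed.

Lemma III_nxy p : p \in N 1 -> ~~ e p z2 -> e p x -> e p y -> False.
Proof.
move=> Hp pz px py; have := III_nu Hp; rewrite px => /(_ isT) pu.
by dia x y u p.
Qed.

Lemma hubIII p v v' : p \in N 1 -> ~~ e p z2 -> e p x || e p y ->
  v \in N 2 -> v' \in N 2 -> v != z2 -> v' != z2 -> v != v' -> e p v -> e p v' ->
  ~~ e u v -> ~~ e u v' -> False.
Proof.
move=> Hp pz pxy *; have := III_nu Hp pxy => pu.
case px: (e p x); first by s115 p v v' x u z2 z3 z4.
have py : e p y by rewrite px in pxy.
by s115 p v v' y u z2 z3 z4.
Qed.

Lemma pairIII p v p' v' : p \in N 1 -> ~~ e p z2 -> p' \in N 1 -> ~~ e p' z2 ->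
  v \in N 2 -> v' \in N 2 -> v != z2 -> v' != z2 -> v != v' -> e p v -> e p' v' ->
  ~~ e u v -> ~~ e u v' -> e p x || e p y -> e p' x || e p' y -> e p x = e p' x -> False.
Proof.
move=> Hp pz Hp' p'z Hv Hv' vz v'z vv' epv ep'v' uv1 uv2 pxy p'xy E.
case: (eqVneq p p') => [E'|pp'].
  by subst p'; apply: (hubIII Hp pz pxy Hv Hv' vz v'z vv' epv ep'v' uv1 uv2).
have pu := III_nu Hp pxy; have p'u := III_nu Hp' p'xy.
case px: (e p x).
  have p'x : e p' x by rewrite -E px.
  have py : ~~ e p y by apply/negP => py; apply: (III_nxy Hp pz px py).
  have p'y : ~~ e p' y by apply/negP => qy; apply: (III_nxy Hp' p'z p'x qy).
  case: (boolP (e p p')) => ?; first by bfly x y u p p'.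
  by s115 x p p' u z2 z3 z4 z5.
have p'x : ~~ e p' x by rewrite -E px.
have py : e p y by rewrite px in pxy.
have p'y : e p' y by rewrite (negbTE p'x) in p'xy.
case: (boolP (e p p')) => ?; first by bfly y x u p p'.
by s115 y p p' u z2 z3 z4 z5.
Qed.
End CaseIII.

Lemma core v1 v2 v3 v4 :
  v1 \in N 2 -> v2 \in N 2 -> v3 \in N 2 -> v4 \in N 2 ->
  v1 != z2 -> v2 != z2 -> v3 != z2 -> v4 != z2 ->
  v1 != v2 -> v1 != v3 -> v1 != v4 -> v2 != v3 -> v2 != v4 -> v3 != v4 -> False.
Proof.
move=> Hv1 Hv2 Hv3 Hv4 v1z v2z v3z v4z d12 d13 d14 d23 d24 d34.
have [p1 [Hp1 e1 o1 p1z]] := pv Hv1 v1z.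
have [p2 [Hp2 e2 o2 p2z]] := pv Hv2 v2z.
have [p3 [Hp3 e3 o3 p3z]] := pv Hv3 v3z.
have [p4 [Hp4 e4 o4 p4z]] := pv Hv4 v4z.
have u1 := uv Hv1 v1z; have u2 := uv Hv2 v2z; have u3 := uv Hv3 v3z; have u4 := uv Hv4 v4z.
case: (boolP (e u y)) => uy.
  case: (eqVneq (e p1 x) (e p2 x)) => E12.
    exact: (pairIII uy Hp1 p1z Hp2 p2z Hv1 Hv2 v1z v2z d12 e1 e2 u1 u2 o1 o2 E12).
  case: (eqVneq (e p1 x) (e p3 x)) => E13.
    exact: (pairIII uy Hp1 p1z Hp3 p3z Hv1 Hv3 v1z v3z d13 e1 e3 u1 u3 o1 o3 E13).
  have E23 : e p2 x = e p3 x.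
    by move: E12 E13; case: (e p1 x); case: (e p2 x); case: (e p3 x).
  exact: (pairIII uy Hp2 p2z Hp3 p3z Hv2 Hv3 v2z v3z d23 e2 e3 u2 u3 o2 o3 E23).
have pX := pairX uy.
have tD := tripleD uy.
case x1: (e p1 x); case x2: (e p2 x); case x3: (e p3 x); case x4: (e p4 x);
  first [ exact: (pX _ _ _ _ Hp1 p1z Hp2 p2z Hv1 Hv2 v1z v2z d12 e1 e2 u1 u2 x1 x2)
        | exact: (pX _ _ _ _ Hp1 p1z Hp3 p3z Hv1 Hv3 v1z v3z d13 e1 e3 u1 u3 x1 x3)
        | exact: (pX _ _ _ _ Hp1 p1z Hp4 p4z Hv1 Hv4 v1z v4z d14 e1 e4 u1 u4 x1 x4)
        | exact: (pX _ _ _ _ Hp2 p2z Hp3 p3z Hv2 Hv3 v2z v3z d23 e2 e3 u2 u3 x2 x3)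
        | exact: (pX _ _ _ _ Hp2 p2z Hp4 p4z Hv2 Hv4 v2z v4z d24 e2 e4 u2 u4 x2 x4)
        | exact: (pX _ _ _ _ Hp3 p3z Hp4 p4z Hv3 Hv4 v3z v4z d34 e3 e4 u3 u4 x3 x4)
        | exact: (tD _ _ _ _ _ _ Hp1 p1z Hp2 p2z Hp3 p3z Hv1 Hv2 Hv3 v1z v2z v3z d12 d13 d23 e1 e2 e3 u1 u2 u3 o1 o2 o3 (negbT x1) (negbT x2) (negbT x3))
        | exact: (tD _ _ _ _ _ _ Hp1 p1z Hp2 p2z Hp4 p4z Hv1 Hv2 Hv4 v1z v2z v4z d12 d14 d24 e1 e2 e4 u1 u2 u4 o1 o2 o4 (negbT x1) (negbT x2) (negbT x4))
        | exact: (tD _ _ _ _ _ _ Hp1 p1z Hp3 p3z Hp4 p4z Hv1 Hv3 Hv4 v1z v3z v4z d13 d14 d34 e1 e3 e4 u1 u3 u4 o1 o3 o4 (negbT x1) (negbT x3) (negbT x4))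
        | exact: (tD _ _ _ _ _ _ Hp2 p2z Hp3 p3z Hp4 p4z Hv2 Hv3 Hv4 v2z v3z v4z d23 d24 d34 e2 e3 e4 u2 u3 u4 o2 o3 o4 (negbT x2) (negbT x3) (negbT x4)) ].
Qed.

End Core.

Lemma pick1 (T : finType) (A : {set T}) n : n.+1 <= #|A| ->
  exists2 v, v \in A & n <= #|A :\ v|.
Proof.
move=> h; have [v Hv] : exists v, v \in A by apply/set0Pn; rewrite -card_gt0 (leq_trans _ h).
exists v => //; move: h; rewrite (cardsD1 v A) Hv. by [].
Qed.

Lemma pick4 (T : finType) (A : {set T}) : 4 <= #|A| ->
  exists v1 v2 v3 v4, [/\ v1 \in A, v2 \in A, v3 \in A, v4 \in A &
    [/\ v1 != v2, v1 != v3, v1 != v4 & [/\ v2 != v3, v2 != v4 & v3 != v4]]].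
Proof.
move=> h.
have [v1 H1 h1] := pick1 h.
have [v2 H2 h2] := pick1 h1.
have [v3 H3 h3] := pick1 h2.
have [v4 H4 _] := pick1 h3.
move: H2 H3 H4; rewrite !inE.
move=> /andP [n21 a2] /andP [n32 /andP [n31 a3]] /andP [n43 /andP [n42 /andP [n41 a4]]].
exists v1, v2, v3, v4; split => //; split; try split; by rewrite // eq_sym.
Qed.

Theorem lemma23 (T : finType) (e : rel T) (x y r : T) :
  simple_graph e ->
  H_free e S115 -> H_free e K4 -> H_free e diamond -> H_free e butterfly ->
  e x y -> e r x -> ~~ e r y -> r != y ->
  (forall u v, u \in Nlayer e x y 2 -> v \in Nlayer e x y 2 -> ~~ e u v) ->
  (forall z, z \in Nlayer e x y 3 ->
     #|[set w in Nlayer e x y 2 | e z w]| = 1) ->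
  5 <= #|Nlayer e x y 2| ->
  Nlayer e x y 6 = set0.
Proof.
move=> [esym eirr] hS hK hD hB exy _ _ _ hind h3 h5.
apply/setP => z6; rewrite in_set0; apply/negbTE/negP => H6.
have [z5 H5 e56] := N_down H6.
have [z4 H4 e45] := N_down H5.
have [z3 H3 e34] := N_down H4.
have [z2 H2 e23] := N_down H3.
have [u Hu eu2] := N_down H2.
have [a Ha eau] := N_down Hu.
have huq : forall b, b \in Nlayer e x y 2 -> b != z2 -> ~~ e z3 b.
  move=> b Hb bz; apply/negP => e3b.
  have /eqP/cards1P [w Hw] := h3 z3 H3.
  have : z2 \in [set w0 in Nlayer e x y 2 | e z3 w0] by rewrite inE H2 esym.
  have : b \in [set w0 in Nlayer e x y 2 | e z3 w0] by rewrite inE Hb e3b.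
  by rewrite Hw !inE => /eqP Eb /eqP Ez; rewrite Eb Ez eqxx in bz.
have h4 : 4 <= #|Nlayer e x y 2 :\ z2|.
  by move: h5; rewrite (cardsD1 z2) H2.
have [v1 [v2 [v3 [v4 [Hv1 Hv2 Hv3 Hv4 [d12 d13 d14 [d23 d24 d34]]]]]]] := pick4 h4.
move: Hv1 Hv2 Hv3 Hv4; rewrite !in_setD1.
move=> /andP [v1z Hv1] /andP [v2z Hv2] /andP [v3z Hv3] /andP [v4z Hv4].
have eua : e u a by rewrite esym.
case: (N0P Ha) => E; rewrite E in eua.
  exact: (core esym eirr hS hK hD hB exy hind huq H2 H3 H4 H5 H6 e23 e34 e45 e56 Hu eu2 eua
    Hv1 Hv2 Hv3 Hv4 v1z v2z v3z v4z d12 d13 d14 d23 d24 d34).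
have eyx : e y x by rewrite esym.
rewrite -!(Nswap e x y) in hind huq H2 H3 H4 H5 H6 Hu Hv1 Hv2 Hv3 Hv4.
exact: (core esym eirr hS hK hD hB eyx hind huq H2 H3 H4 H5 H6 e23 e34 e45 e56 Hu eu2 eua
    Hv1 Hv2 Hv3 Hv4 v1z v2z v3z v4z d12 d13 d14 d23 d24 d34).
Qed.
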